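(* Let $\mathcal X,\mathcal Y$ be compact convex sets and $\mathcal L:\mathcal X\times\mathcal Y\to\mathbb R$ a differentiable convex-concave function with Lipschitz continuous gradient that is uniformly strongly convex-concave with constants $(\mu_{\mathcal X},\mu_{\mathcal Y})$, with saddle point $(x^*,y^* )$. Then $$M_{XY}\le\sqrt{\frac2{\mu_{\mathcal Y}}}L_{XY}D_{\mathcal X}\quad\text{and}\quad M_{YX}\le\sqrt{\frac2{\mu_{\mathcal X}}}L_{YX}D_{\mathcal Y}.$$
   Context: Norms $\|\cdot\|_{\mathcal X},\|\cdot\|_{\mathcal Y}$ with duals $\|\cdot\|_{\mathcal X^*},\|\cdot\|_{\mathcal Y^*}$; $D_{\mathcal X}:=\sup_{x,x'\in\mathcal X}\|x-x'\|_{\mathcal X}$, similarly $D_{\mathcal Y}$. Uniformly strongly convex-concave: $\mathcal L(\cdot,y)$ is $\mu_{\mathcal X}$-strongly convex for every $y$ and $-\mathcal L(x,\cdot)$ is $\mu_{\mathcal Y}$-strongly convex for every $x$, $\mu_{\mathcal X},\mu_{\mathcal Y}>0$. Saddle point: $\mathcal L(x^*,y)\le\mathcal L(x^*,y^* )\le\mathcal L(x,y^* )$; $\mathcal L^*:=\mathcal L(x^*,y^* )$. Partial Lipschitz constants: $\|\nabla_x\mathcal L(x,y)-\nabla_x\mathcal L(x,y')\|_{\mathcal X^*}\le L_{XY}\|y-y'\|_{\mathcal Y}$ and $\|\nabla_y\mathcal L(x,y)-\nabla_y\mathcal L(x',y)\|_{\mathcal Y^*}\le L_{YX}\|x-x'\|_{\mathcal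 X}$ for all $x,x',y,y'$. Bilinearity coefficients: $M_{XY}:=\sup\langle s-v,\frac{\nabla_x\mathcal L(x,y^* )-\nabla_x\mathcal L(x,y)}{\sqrt{\mathcal L^*-\mathcal L(x^*,y)}}\rangle$ over $y\in\mathcal Y\setminus\{y^*\}$, $x,s,v\in\mathcal X$; $M_{YX}:=\sup\langle s-v,\frac{\nabla_y\mathcal L(x,y)-\nabla_y\mathcal L(x^*,y)}{\sqrt{\mathcal L(x,y^* )-\mathcal L^*}}\rangle$ over $x\in\mathcal X\setminus\{x^*\}$, $y,s,v\in\mathcal Y$. *)

(* Defs.v *)
From HB Require Import structures.
From mathcomp Require Import all_boot all_order all_algebra.
From mathcomp Require Import all_classical all_reals all_analysis.
Set Implicit Arguments. Unset Strict Implicit. Unset Printing Implicit Defensive.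
Import Order.TTheory GRing.Theory Num.Theory.
Import numFieldNormedType.Exports.
Local Open Scope classical_set_scope.
Local Open Scope ring_scope.

Section Defs.
Variable R : realType.

Definition pair (n : nat) (g x : 'rV[R]_n) : R := \sum_(i < n) g ord0 i * x ord0 i.

Definition is_norm (n : nat) (N : 'rV[R]_n -> R) : Prop :=
  [/\ forall x, 0 <= N x,
      forall x, N x = 0 -> x = 0,
      forall (a : R) x, N (a *: x) = `|a| * N x
    & forall x y, N (x + y) <= N x + N y].

Definition dual_norm (n : nat) (N : 'rV[R]_n -> R) (g : 'rV[R]_n) : R :=
  sup [set pair g x | x in [set x | N x <= 1]].

Definition diam (n : nat) (N : 'rV[R]_n -> R) (C : set 'rV[R]_n) : R :=
  sup [set N (p.1 - p.2) | p in C `*` C].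

Definition strongly_convex_on (n : nat) (N : 'rV[R]_n -> R) (mu : R)
  (C : set 'rV[R]_n) (f : 'rV[R]_n -> R) : Prop :=
  forall a b (t : R), C a -> C b -> 0 <= t <= 1 ->
    f (t *: a + (1 - t) *: b)
      <= t * f a + (1 - t) * f b - mu / 2 * t * (1 - t) * (N (a - b)) ^+ 2.

Definition grad_x (n m : nat) (L : 'rV[R]_n -> 'rV[R]_m -> R)
  (x : 'rV[R]_n) (y : 'rV[R]_m) : 'rV[R]_n :=
  \row_(i < n) 'D_(delta_mx ord0 i) (fun x' => L x' y) x.

Definition grad_y (n m : nat) (L : 'rV[R]_n -> 'rV[R]_m -> R)
  (x : 'rV[R]_n) (y : 'rV[R]_m) : 'rV[R]_m :=
  \row_(j < m) 'D_(delta_mx ord0 j) (fun y' => L x y') y.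

Definition M_XY (n m : nat) (L : 'rV[R]_n -> 'rV[R]_m -> R)
  (X : set 'rV[R]_n) (Y : set 'rV[R]_m) (xs : 'rV[R]_n) (ys : 'rV[R]_m) : \bar R :=
  ereal_sup [set z : \bar R | exists x y s v,
    [/\ X x, Y y, y != ys, X s /\ X v &
     z = (pair (s - v)
            ((Num.sqrt (L xs ys - L xs y))^-1 *: (grad_x L x ys - grad_x L x y)))%:E]].

Definition M_YX (n m : nat) (L : 'rV[R]_n -> 'rV[R]_m -> R)
  (X : set 'rV[R]_n) (Y : set 'rV[R]_m) (xs : 'rV[R]_n) (ys : 'rV[R]_m) : \bar R :=
  ereal_sup [set z : \bar R | exists x y s v,
    [/\ X x, x != xs, Y y, Y s /\ Y v &
     z = (pair (s - v)
            ((Num.sqrt (L x ys - L xs ys))^-1 *: (grad_y L x y - grad_y L xs y)))%:E]].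
End Defs.

(* Main.v *)
Require Import Defs.
From HB Require Import structures.
From mathcomp Require Import all_boot all_order all_algebra.
From mathcomp Require Import all_classical all_reals all_analysis.
From mathcomp Require Import ring lra.
Import Order.TTheory GRing.Theory Num.Theory.
Import numFieldNormedType.Exports.
Local Open Scope classical_set_scope.
Local Open Scope ring_scope.

Section H.
Variable R : realType.
Variable n : nat.
Variable N : 'rV[R]_n -> R.
Hypothesis hN : is_norm N.

Lemma N0 : N 0 = 0.
Proof. case: hN => _ _ hZ _. by rewrite -(scale0r 0) hZ normr0 mul0r. Qed.

Lemma NN x : N (- x) = N x.
Proof. case: hN => _ _ hZ _. by rewrite -scaleN1r hZ normrN normr1 mul1r. Qed.

Lemma Ndist x t : `|N x - N t| <= N (x - t).
Proof.
case: hN => _ _ _ hT.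
have h1 := hT (x - t) t; have h2 := hT (t - x) x.
rewrite subrK in h1; rewrite subrK in h2.
rewrite -opprB NN in h2.
rewrite ler_norml; apply/andP; split; lra.
Qed.

Lemma coord_le (x : 'rV[R]_n) i : `|x ord0 i| <= `|x|.
Proof.
change `|x| with (mx_norm x); rewrite mx_normrE.
by apply: (le_trans _ (le_bigmax _ _ (ord0, i))).
Qed.

Lemma N_sum (I : finType) (f : I -> 'rV[R]_n) :
  N (\sum_i f i) <= \sum_i N (f i).
Proof.
case: hN => _ _ _ hT.
apply: (big_ind2 (fun a b => N a <= b)); first by rewrite N0.
move=> a b a' b' h1 h2; apply: le_trans (hT _ _) _; exact: lerD.
by [].
Qed.

Lemma N_upper : exists K, 0 <= K /\ forall x, N x <= K * `|x|.
Proof.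
case: hN => hp _ hZ hT.
exists (\sum_(i < n) N (delta_mx ord0 i)); split.
  by apply: sumr_ge0 => i _; apply: hp.
move=> x.
rewrite {1}[x]row_sum_delta.
apply: le_trans (N_sum _ (fun j : 'I_n => x 0 j *: delta_mx 0 j)) _.
rewrite mulr_suml; apply: ler_sum => i _.
rewrite hZ mulrC; apply: ler_wpM2l; first exact: hp.
exact: coord_le.
Qed.

Lemma N_cont : continuous N.
Proof.
have [K [K0 hK]] := N_upper.
move=> x; apply/(@cvgrPdist_le _ _ _ _ (nbhs_filter x)) => e e0.
have e1 : 0 < e / (K + 1) by apply: divr_gt0 => //; lra.
apply: (proj2 (@nbhs_normP R [the pseudoMetricNormedZmodType R of 'rV[R]_n] x _)); exists (e / (K + 1)) => //= t.
rewrite /ball_ /= => hxt.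
apply: le_trans (Ndist x t) _.
apply: le_trans (hK _) _.
have : K * `|x - t| <= `|x - t| * (K + 1).
  rewrite mulrDr mulr1 mulrC lerDl; exact: normr_ge0.
move: hxt; rewrite ltr_pdivlMr; last lra.
lra.
Qed.

Lemma N_lower : exists2 c, 0 < c & forall x, c * `|x| <= N x.
Proof.
case: hN => hp hd hZ hT.
pose S := [set x : 'rV[R]_n | `|x| = 1].
have cS : compact S.
  apply: bounded_closed_compact.
    rewrite /bounded_near; exists 1; split; first exact: num_real.
    by move=> M hM x /= ->; exact: ltW.
  have -> : S = (fun x : 'rV[R]_n => `|x|) @^-1` [set 1] by [].
  apply: (proj1 (continuous_closedP _)); first exact: norm_continuous.
  exact: closed_eq.
have xS x : x != 0 -> S (`|x|^-1 *: x).
  move=> x0; rewrite /S /= normrZ normfV normr_id mulVf //.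
  by rewrite normr_eq0.
case: (pselect (S !=set0)) => [S0|S0].
  have [c0 Sc0 hmin] := compact_EVT_min S0 cS (continuous_subspaceT N_cont).
  have Sc : S c0 by move: Sc0; rewrite inE.
  have c00 : 0 < N c0.
    rewrite lt_neqAle hp andbT; apply/eqP => /esym /hd c0E.
    by move: Sc; rewrite /S /= c0E normr0 => /eqP; rewrite eq_sym oner_eq0.
  exists (N c0) => // x.
  have [->|x0] := eqVneq x 0; first by rewrite normr0 mulr0 hp.
  have := hmin _ (mem_set (xS x x0)).
  rewrite hZ normfV normr_id ler_pdivlMl; last by rewrite normr_gt0.
  by rewrite mulrC.
exists 1 => // x; have [->|x0] := eqVneq x 0; first by rewrite normr0 mulr0 hp.
by exfalso; apply: S0; exists (`|x|^-1 *: x); apply: xS.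
Unshelve. all: by end_near.
Qed.

Lemma pairZr (g x : 'rV[R]_n) a : pair g (a *: x) = a * pair g x.
Proof.
rewrite /pair mulr_sumr; apply: eq_bigr => i _; rewrite mxE; ring.
Qed.

Lemma pair_le (g x : 'rV[R]_n) : pair g x <= (\sum_i `|g ord0 i|) * `|x|.
Proof.
rewrite /pair mulr_suml; apply: ler_sum => i _.
apply: le_trans (ler_norm _) _; rewrite normrM.
apply: ler_wpM2l => //; exact: coord_le.
Qed.

Lemma dual_has_sup (g : 'rV[R]_n) :
  has_sup [set pair g x | x in [set x | N x <= 1]].
Proof.
have [c c0 hc] := N_lower.
split.
  exists (pair g 0), 0 => //=; rewrite N0; exact: ler01.
exists ((\sum_i `|g ord0 i|) / c) => _ [x /= hx <-].
apply: le_trans (pair_le g x) _.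
apply: ler_wpM2l; first by apply: sumr_ge0.
rewrite -(ler_pM2l c0) mulfV ?gt_eqF //; exact: le_trans (hc x) hx.
Qed.

Lemma dual_ge0 (g : 'rV[R]_n) : 0 <= dual_norm N g.
Proof.
have -> : 0 = pair g 0 by rewrite /pair big1 // => i _; rewrite mxE mulr0.
apply: sup_upper_bound; first exact: dual_has_sup.
exists 0 => //=; rewrite N0; exact: ler01.
Qed.

Lemma pair_dual (g x : 'rV[R]_n) : pair g x <= dual_norm N g * N x.
Proof.
case: hN => hp hd hZ hT.
have [->|x0] := eqVneq x 0.
  by rewrite N0 mulr0 /pair big1 // => i _; rewrite mxE mulr0.
have Nx0 : 0 < N x.
  by rewrite lt_neqAle hp andbT; apply/eqP => /esym /hd; apply/eqP.
have h : pair g ((N x)^-1 *: x) <= dual_norm N g.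
  apply: sup_upper_bound; first exact: dual_has_sup.
  exists ((N x)^-1 *: x) => //=.
  by rewrite hZ ger0_norm ?invr_ge0 ?hp // mulVf // gt_eqF.
move: h; rewrite pairZr ler_pdivrMl // mulrC //.
Qed.

Lemma diam_ub (X : set 'rV[R]_n) s v : compact X -> X s -> X v ->
  N (s - v) <= diam N X.
Proof.
move=> cX Xs Xv.
have [K [K0 hK]] := N_upper.
have [M0 [_ hM0]] := compact_bounded cX.
have hM : forall x, X x -> `|x| <= `|M0| + 1.
  move=> x Xx; apply: (hM0 (`|M0| + 1)) => //.
  apply: le_lt_trans (ler_norm _) _; lra.
apply: sup_upper_bound; last by exists (s, v).
split; first by exists (N (s - v)), (s, v).
exists (K * (2 * (`|M0| + 1))) => _ [[a b] [/= Xa Xb] <-].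
apply: le_trans (hK _) _; apply: ler_wpM2l => //.
apply: le_trans (ler_normB _ _) _.
have := hM a Xa; have := hM b Xb; lra.
Qed.

Lemma strong_min (mu : R) (C : set 'rV[R]_n) (f : 'rV[R]_n -> R) z y :
  0 < mu -> convex_set C -> strongly_convex_on N mu C f ->
  C z -> (forall w, C w -> f z <= f w) -> C y ->
  mu / 2 * N (y - z) ^+ 2 <= f y - f z.
Proof.
move=> mu0 cC hf Cz hmin Cy.
have key : forall t, 0 < t <= 1 -> mu / 2 * (1 - t) * N (y - z) ^+ 2 <= f y - f z.
  move=> t /andP[t0 t1].
  have Cp : C (t *: y + (1 - t) *: z).
    have := cC y z (Itv01 (ltW t0) t1) (mem_set Cy) (mem_set Cz).
    by rewrite inE.
  have h1 := hmin _ Cp.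
  have tt : 0 <= t <= 1 by rewrite (ltW t0) t1.
  have h2 := hf y z t Cy Cz tt.
  have : t * (mu / 2 * (1 - t) * N (y - z) ^+ 2) <= t * (f y - f z).
    set d := N (y - z) ^+ 2 in h2 *.
    have -> : t * (mu / 2 * (1 - t) * d) = mu / 2 * t * (1 - t) * d by ring.
    lra.
  by rewrite ler_pM2l.
set A := f y - f z; set B := mu / 2 * N (y - z) ^+ 2.
have A0 : 0 <= A.
  have := key 1; rewrite subrr mulr0 mul0r; apply; by rewrite lexx ltr01.
rewrite leNgt; apply/negP => AB.
have B0 : 0 < B by apply: le_lt_trans AB.
pose t := (B - A) / (2 * B).
have t0 : 0 < t by apply: divr_gt0; lra.
have t1 : t <= 1 by rewrite ler_pdivrMr; lra.
have := key t; rewrite t0 t1 => /(_ isT).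
have -> : mu / 2 * (1 - t) * N (y - z) ^+ 2 = B - t * B by rewrite /B; ring.
have tB : t * B = (B - A) / 2.
  by rewrite /t; field; rewrite gt_eqF.
rewrite tB => h; move: AB h; rewrite /A /B; lra.
Qed.

End H.
Lemma core (R : realType) (mu De d dn Lc p e D : R) :
  0 < mu -> mu / 2 * d ^+ 2 <= De -> 0 < d -> 0 <= dn -> dn <= Lc * d ->
  p <= dn * e -> 0 <= e -> e <= D ->
  (Num.sqrt De)^-1 * p <= Num.sqrt (2 / mu) * Lc * D.
Proof.
move=> mu0 hDe d0 dn0 hdn hp e0 eD.
have Lc0 : 0 <= Lc by rewrite -(pmulr_lge0 _ d0); apply: le_trans hdn.
have hp' : p <= Lc * d * D.
  apply: le_trans hp _; apply: le_trans (_ : dn * e <= Lc * d * e) _.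
    by apply: ler_wpM2r.
  by apply: ler_wpM2l => //; apply: mulr_ge0 => //; exact: ltW.
pose q := Num.sqrt (mu / 2).
have q0 : 0 < q by rewrite sqrtr_gt0; lra.
have hq : Num.sqrt (2 / mu) = q^-1.
  by rewrite -sqrtrV; [congr Num.sqrt; rewrite invf_div | lra].
have sD : q * d <= Num.sqrt De.
  rewrite -[d]ger0_norm ?(ltW d0) // -sqrtr_sqr -sqrtrM; last lra.
  rewrite ler_sqrt; first by []. apply: le_trans hDe; apply: mulr_ge0; [lra | exact: sqr_ge0].
have qd0 : 0 < q * d by apply: mulr_gt0.
have De0 : 0 < Num.sqrt De by apply: lt_le_trans sD.
apply: le_trans (_ : (Num.sqrt De)^-1 * (Lc * d * D) <= _).
  by apply: ler_wpM2l => //; rewrite invr_ge0 ltW.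
apply: le_trans (_ : (q * d)^-1 * (Lc * d * D) <= _).
  apply: ler_wpM2r.
    by apply: mulr_ge0; [apply: mulr_ge0 => //; exact: ltW | lra].
  by rewrite lef_pV2 ?posrE.
rewrite hq le_eqVlt; apply/orP; left; apply/eqP; field.
by rewrite !gt_eqF.
Qed.

Lemma pairC (R : realType) n (a b : 'rV[R]_n) : pair a b = pair b a.
Proof. by rewrite /pair; apply: eq_bigr => i _; rewrite mulrC. Qed.

Theorem proposition13 (R : realType) (n m : nat)
  (NX : 'rV[R]_n -> R) (NY : 'rV[R]_m -> R)
  (X : set 'rV[R]_n) (Y : set 'rV[R]_m)
  (L : 'rV[R]_n -> 'rV[R]_m -> R)
  (muX muY LXY LYX : R) (xs : 'rV[R]_n) (ys : 'rV[R]_m) :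
  is_norm NX -> is_norm NY ->
  compact X -> convex_set X -> compact Y -> convex_set Y ->
  (* L is differentiable (jointly) at every point of X x Y *)
  (forall x y, X x -> Y y ->
     differentiable (fun p : 'rV[R]_n * 'rV[R]_m => L p.1 p.2) (x, y)) ->
  (* the gradient of L is Lipschitz continuous on X x Y *)
  (exists Lg : R, forall x x' y y', X x -> X x' -> Y y -> Y y' ->
     dual_norm NX (grad_x L x y - grad_x L x' y')
       + dual_norm NY (grad_y L x y - grad_y L x' y')
     <= Lg * (NX (x - x') + NY (y - y'))) ->
  (* uniform strong convexity-concavity *)
  0 < muX -> 0 < muY ->
  (forall y, Y y -> strongly_convex_on NX muX X (fun x => L x y)) ->
  (forall x, X x -> strongly_convex_on NY muY Y (fun y => - L x y)) ->
  (* saddle point *)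
  X xs -> Y ys ->
  (forall x y, X x -> Y y -> L xs y <= L xs ys /\ L xs ys <= L x ys) ->
  (* partial Lipschitz constants *)
  (forall x y y', X x -> Y y -> Y y' ->
     dual_norm NX (grad_x L x y - grad_x L x y') <= LXY * NY (y - y')) ->
  (forall x x' y, X x -> X x' -> Y y ->
     dual_norm NY (grad_y L x y - grad_y L x' y) <= LYX * NX (x - x')) ->
  (M_XY L X Y xs ys <= (Num.sqrt (2 / muY) * LXY * diam NX X)%:E)%E /\
  (M_YX L X Y xs ys <= (Num.sqrt (2 / muX) * LYX * diam NY Y)%:E)%E.
Proof.
move=> hNX hNY cX cvX cY cvY _ _ muX0 muY0 scX scY Xxs Yys sad hXY hYX.
split.
- apply: ge_ereal_sup => _ [x [y [s [v [Xx Yy yne [Xs Xv] ->]]]]].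
  rewrite lee_fin pairZr pairC.
  have hd : 0 < NY (y - ys).
    case: hNY => hp hd _ _; rewrite lt_neqAle hp andbT; apply/eqP => /esym /hd.
    by move/eqP; rewrite subr_eq0 (negbTE yne).
  apply: (@core _ muY _ (NY (y - ys)) _ _ _ (NX (s - v)) _ muY0 _ hd (@dual_ge0 _ _ _ hNX _)).
  + have := @strong_min _ _ _ _ _ _ _ _ muY0 cvY (scY xs Xxs) Yys _ Yy.
    move=> h; apply: le_trans (h _) _; last by rewrite opprK addrC.
    move=> w Yw; rewrite lerN2; exact: (proj1 (sad xs w Xxs Yw)).
  + have := hXY x ys y Xx Yys Yy; rewrite -(@NN _ _ _ hNY (y - ys)) opprB; exact.
  + exact: (@pair_dual _ _ _ hNX).
  + by case: hNX.
  + exact: (@diam_ub _ _ _ hNX).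
- apply: ge_ereal_sup => _ [x [y [s [v [Xx xne Yy [Ys Yv] ->]]]]].
  rewrite lee_fin pairZr pairC.
  have hd : 0 < NX (x - xs).
    case: hNX => hp hd _ _; rewrite lt_neqAle hp andbT; apply/eqP => /esym /hd.
    by move/eqP; rewrite subr_eq0 (negbTE xne).
  apply: (@core _ muX _ (NX (x - xs)) _ _ _ (NY (s - v)) _ muX0 _ hd (@dual_ge0 _ _ _ hNY _)).
  + apply: (@strong_min _ _ _ _ _ _ _ _ muX0 cvX (scX ys Yys) Xxs _ Xx).
    move=> w Xw; exact: (proj2 (sad w ys Xw Yys)).
  + exact: (hYX x xs y Xx Xxs Yy).
  + exact: (@pair_dual _ _ _ hNY).
  + by case: hNY.
  + exact: (@diam_ub _ _ _ hNY).
Qed.
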